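(* Let $A$ be an infinitesimal Hopf algebra and let $L:A\to A$ be a linear map satisfying $\Delta(L(x))=L(x)\otimes 1+(\mathrm{Id}\otimes L)\circ\Delta(x)$ for all $x\in A$. Then there exists a unique morphism of infinitesimal Hopf algebras (i.e. unital algebra morphism that is also a counital coalgebra morphism) $\phi:\mathcal{H}\to A$ such that $\phi\circ B^+=L\circ\phi$.
   Context: An infinitesimal bialgebra over a field $K$ is an associative unital algebra $A$ with a coassociative counital coproduct $\Delta$ (counit $\varepsilon$) such that $\Delta(ab)=\Delta(a)(1\otimes b)+(a\otimes 1)\Delta(b)-a\otimes b$; it is an infinitesimal Hopf algebra if $\mathrm{Id}_A$ is invertible for the convolution product $f\star g=m\circ(f\otimes g)\circ\Delta$. Planar rooted trees have their children linearly ordered left to right; a planar forest is a finite, possibly empty, sequence of planar rooted trees ($1$ = empty forest); $\mathcal{H}$ is the free associative unital $K$-algebra on planar rooted trees, with basis the planar forests and product concatenation. $B^+(F)$ is the tree obtained by grafting the trees of the forest $F$ (in order) on a new common root. $\mathcal{H}$ carries the counit $\varepsilon(F)=\delta_{F,1}$ and the coproduct $\Delta$ defined as the unique linear map with $\Delta(1)=1\otimes1$, $\Delta(xy)=(x\otimes1)\Delta(y)+\Delta(x)(1\otimes y)-x\otimes y$ and $\Delta(B^+(x))=B^+(x)\otimes 1+(\mathrm{Id}\otimes B^+)\Delta(x)$; with these, $\mathcal{H}$ is an infinitesimal Hopf algebra. *)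

(* Defs.v *)
From HB Require Import structures.
From mathcomp Require Import all_boot all_order all_algebra.
From mathcomp Require Import finmap monalg.
Set Implicit Arguments.
Unset Strict Implicit.
Unset Printing Implicit Defensive.
Import GRing.Theory.
Local Open Scope ring_scope.

Inductive ptree : Type := Node of seq ptree.

Fixpoint ptree_enc (t : ptree) : GenTree.tree unit :=
  let: Node ts := t in GenTree.Node 0 (map ptree_enc ts).

Fixpoint ptree_dec (g : GenTree.tree unit) : ptree :=
  match g with
  | GenTree.Leaf _ => Node [::]
  | GenTree.Node _ gs => Node (map ptree_dec gs)
  end.

Fixpoint ptree_encK (t : ptree) : ptree_dec (ptree_enc t) = t :=
  match t return ptree_dec (ptree_enc t) = t with
  | Node ts => f_equal Node
      ((fix aux (s : seq ptree) : map ptree_dec (map ptree_enc s) = s :=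
          match s return map ptree_dec (map ptree_enc s) = s with
          | [::] => erefl
          | t :: s => f_equal2 cons (ptree_encK t) (aux s)
          end) ts)
  end.

HB.instance Definition _ := Countable.copy ptree (can_type ptree_encK).

(* H : free associative unital K-algebra on planar rooted trees; its
   basis is the planar forests {fmonom ptree} (= seq ptree, product =
   concatenation, unit = empty forest).                                *)
Definition Hf (K : fieldType) := {malg K[{fmonom ptree}]}.

Definition forest (K : fieldType) (F : seq ptree) : Hf K := << FMonom F >>.

Definition lin_ext (K : fieldType) (V : lmodType K)
  (f : seq ptree -> V) (x : Hf K) : V :=
  \sum_(k <- msupp x) x@_k *: f (fmonom_val k).

Definition Bplus (K : fieldType) (x : Hf K) : Hf K :=
  lin_ext (fun F => forest K [:: Node F]) x.

Definition epsH (K : fieldType) (x : Hf K) : K := x@_(FMonom [::]).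

(* Tensors: an element of V (x) W is represented by a finite formal sum
   sum_i v_i (x) w_i, i.e. a list of pairs.  Two such lists represent
   the same tensor iff they agree on every bilinear form V x W -> K
   (over a field, linear forms on V (x) W separate points).            *)
Definition tensor (V W : Type) := seq (V * W).

Definition bilinear_form (K : fieldType) (V W : lmodType K)
  (b : V -> W -> K) : Prop :=
  (forall a x y z, b (a *: x + y) z = a * b x z + b y z) /\
  (forall a x y z, b z (a *: x + y) = a * b z x + b z y).

Definition trilinear_form (K : fieldType) (U V W : lmodType K)
  (b : U -> V -> W -> K) : Prop :=
  (forall a x y u v, b (a *: x + y) u v = a * b x u v + b y u v) /\
  (forall a x y u v, b u (a *: x + y) v = a * b u x v + b u y v) /\
  (forall a x y u v, b u v (a *: x + y) = a * b u v x + b u v y).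

Definition teq (K : fieldType) (V W : lmodType K) (t1 t2 : tensor V W) :=
  forall b : V -> W -> K, bilinear_form b ->
    \sum_(p <- t1) b p.1 p.2 = \sum_(p <- t2) b p.1 p.2.

Definition teq3 (K : fieldType) (U V W : lmodType K)
  (t1 t2 : seq (U * V * W)) :=
  forall b : U -> V -> W -> K, trilinear_form b ->
    \sum_(p <- t1) b p.1.1 p.1.2 p.2 = \sum_(p <- t2) b p.1.1 p.1.2 p.2.

Definition tmap (V W V' W' : Type) (f : V -> V') (g : W -> W')
  (t : tensor V W) : tensor V' W' := [seq (f p.1, g p.2) | p <- t].

(* The coproduct of H on basis forests, by the defining recursion
     Delta(1) = 1 (x) 1,
     Delta(T G) = (T (x) 1) Delta(G) + Delta(T) (1 (x) G) - T (x) G,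
     Delta(B^+(F)) = B^+(F) (x) 1 + (Id (x) B^+) Delta(F).             *)
Fixpoint DeltaT (K : fieldType) (t : ptree) : tensor (Hf K) (Hf K) :=
  let: Node F := t in
  (forest K [:: Node F], 1)
  :: tmap id (@Bplus K)
       ((fix DF (s : seq ptree) : tensor (Hf K) (Hf K) :=
           match s with
           | [::] => [:: (1, 1)]
           | T :: G =>
               [seq (forest K [:: T] * p.1, p.2) | p <- DF G]
               ++ [seq (p.1, p.2 * forest K G) | p <- DeltaT K T]
               ++ [:: (- forest K [:: T], forest K G)]
           end) F).

Fixpoint DeltaF (K : fieldType) (s : seq ptree) : tensor (Hf K) (Hf K) :=
  match s with
  | [::] => [:: (1, 1)]
  | T :: G =>
      [seq (forest K [:: T] * p.1, p.2) | p <- DeltaF K G]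
      ++ [seq (p.1, p.2 * forest K G) | p <- DeltaT K T]
      ++ [:: (- forest K [:: T], forest K G)]
  end.

Definition DeltaH (K : fieldType) (x : Hf K) : tensor (Hf K) (Hf K) :=
  flatten [seq [seq (x@_k *: p.1, p.2) | p <- DeltaF K (fmonom_val k)]
          | k <- msupp x].

Definition convol (K : fieldType) (A : algType K)
  (Delta : A -> tensor A A) (f g : A -> A) (x : A) : A :=
  \sum_(p <- Delta x) f p.1 * g p.2.

Record is_inf_hopf (K : fieldType) (A : algType K)
  (Delta : A -> tensor A A) (eps : A -> K) : Prop := {
  ih_Delta_lin : forall a x y,
    teq (Delta (a *: x + y)) ([seq (a *: p.1, p.2) | p <- Delta x] ++ Delta y);
  ih_eps_lin : forall a x y, eps (a *: x + y) = a * eps x + eps y;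
  ih_coassoc : forall x,
    teq3 [seq (q.1, q.2, p.2) | p <- Delta x, q <- Delta p.1]
         [seq (p.1, q.1, q.2) | p <- Delta x, q <- Delta p.2];
  ih_counitl : forall x, \sum_(p <- Delta x) eps p.1 *: p.2 = x;
  ih_counitr : forall x, \sum_(p <- Delta x) eps p.2 *: p.1 = x;
  ih_inf : forall x y,
    teq (Delta (x * y))
        ([seq (p.1, p.2 * y) | p <- Delta x]
         ++ [seq (x * p.1, p.2) | p <- Delta y] ++ [:: (- x, y)]);
  ih_hopf : exists S : {linear A -> A},
    forall x, convol Delta S id x = eps x *: 1 /\
              convol Delta id S x = eps x *: 1
}.

Definition inf_hopf_morph (K : fieldType) (A : algType K)
  (Delta : A -> tensor A A) (eps : A -> K) (phi : Hf K -> A) : Prop :=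
  [/\ phi 1 = 1,
      forall x y, phi (x * y) = phi x * phi y,
      forall x, eps (phi x) = epsH x
    & forall x, teq (Delta (phi x)) (tmap phi phi (DeltaH x))].

(* Main.v *)
Require Import Defs.
From HB Require Import structures.
From mathcomp Require Import all_boot all_order all_algebra.
From mathcomp Require Import finmap monalg ring.
Set Implicit Arguments.
Unset Strict Implicit.
Unset Printing Implicit Defensive.
Import GRing.Theory.
Local Open Scope ring_scope.

Section Induct.
Variables (P : ptree -> Prop) (Q : seq ptree -> Prop).
Hypotheses (Hnil : Q [::]) (Hcons : forall t s, P t -> Q s -> Q (t :: s))
  (Hnode : forall s, Q s -> P (Node s)).
Fixpoint ptree_ind2 (t : ptree) : P t :=
  match t with Node s => Hnode
    ((fix aux (s : seq ptree) : Q s := match s with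
      | [::] => Hnil | t :: s => Hcons (ptree_ind2 t) (aux s) end) s) end.
Lemma forest_ind2 s : Q s.
Proof. elim: s => // t s IH; exact: Hcons (ptree_ind2 t) IH. Qed.
End Induct.

Section Basics.
Variable K : fieldType.

Lemma forest_cons T G : forest K (T :: G) = forest K [:: T] * forest K G.
Proof.
rewrite /forest malgM_def fgmulUU mulr1; congr (<< _ >>).
by apply: val_inj; rewrite /= fmM.
Qed.

Lemma forest_nil : forest K [::] = 1.
Proof. rewrite /forest; congr (<< _ >>); apply: val_inj; by rewrite /= fm1. Qed.

Lemma lin_ext_U (V : lmodType K) (f : seq ptree -> V) F :
  lin_ext f (forest K F) = f F.
Proof. by rewrite /lin_ext /forest msuppU1 big_seq_fset1 mcoeffUU scale1r. Qed.

Lemma Bplus_forest F : Bplus (forest K F) = forest K [:: Node F].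
Proof. exact: lin_ext_U. Qed.

Lemma Hf_expand (x : Hf K) :
  x = \sum_(k <- msupp x) x@_k *: forest K (fmonom_val k).
Proof.
rewrite {1}(monalgE x); apply: eq_bigr => k _.
apply/malgP => k'; rewrite mcoeffZ /forest fmK !mcoeffU.
by rewrite mulrnAr mulr1.
Qed.

Definition islin (V W : lmodType K) (f : V -> W) :=
  forall a x y, f (a *: x + y) = a *: f x + f y.

Lemma islin0 (V W : lmodType K) (f : V -> W) : islin f -> f 0 = 0.
Proof.
move=> hf; have := hf 1 0 0; rewrite scale1r addr0 => /(congr1 (fun z => z - f 0)).
by rewrite subrr addrK scale1r => /esym.
Qed.

Lemma islin_sum (I : Type) (V W : lmodType K) (f : V -> W) (r : seq I) c y :
  islin f -> f (\sum_(i <- r) c i *: y i) = \sum_(i <- r) c i *: f (y i).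
Proof.
move=> hf; elim: r => [|i r IH]; first by rewrite !big_nil islin0.
by rewrite !big_cons hf IH.
Qed.

Lemma lin_expand (V : lmodType K) (f : Hf K -> V) x : islin f ->
  f x = \sum_(k <- msupp x) x@_k *: f (forest K (fmonom_val k)).
Proof. by move=> hf; rewrite {1}(Hf_expand x) islin_sum. Qed.

End Basics.

Section Main.
Variables (K : fieldType) (A : algType K).
Variables (Delta : A -> tensor A A) (eps : A -> K).
Hypothesis hA : is_inf_hopf Delta eps.
Variable L : {linear A -> A}.

Lemma A_nz : (1 : A) != 0. Proof. exact: oner_neq0. Qed.

Fixpoint phiT (t : ptree) : A := let: Node F := t in
  L ((fix pf (s : seq ptree) : A := match s with
      | [::] => 1 | t :: s => phiT t * pf s end) F).
Definition phiS (s : seq ptree) : A := foldr (fun t acc => phiT t * acc) 1 s.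
Lemma phiT_node F : phiT (Node F) = L (phiS F).
Proof. by rewrite /=; congr (L _); elim: F => //= t s ->. Qed.

Lemma phiS_cat s1 s2 : phiS (s1 ++ s2) = phiS s1 * phiS s2.
Proof. by elim: s1 => [|t s IH] /=; rewrite ?mul1r // IH mulrA. Qed.

Definition hm (m : fmonom ptree) : A := phiS (fmonom_val m).
Lemma hm_mmorph : mmorphism hm.
Proof. split; last by rewrite /hm fm1. by move=> m1 m2; rewrite /hm fmM phiS_cat. Qed.
HB.instance Definition _ := isMultiplicative.Build (fmonom ptree) A hm hm_mmorph.

Definition phi (x : Hf K) : A := mmap (in_alg A) hm x.

Lemma phiE x : phi x = \sum_(k <- msupp x) x@_k *: phiS (fmonom_val k).
Proof. by rewrite /phi mmapE; apply: eq_bigr => k _; rewrite mulr_algl. Qed.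

Lemma phi_add : additive phi.
Proof. exact: mmap_is_additive. Qed.
HB.instance Definition _ := GRing.isAdditive.Build (Hf K) A phi phi_add.

Lemma phi_scale : scalable phi.
Proof. by move=> a x; rewrite /phi mmapZ /= mulr_algl. Qed.
HB.instance Definition _ := GRing.isScalable.Build K (Hf K) A *:%R phi phi_scale.

Lemma islin_phi : islin phi.
Proof. move=> a u v; exact: linearP. Qed.

Lemma phiM x y : phi (x * y) = phi x * phi y.
Proof.
have [h _] := @commr_mmap_is_multiplicative (fmonom ptree) K A (in_alg A) hm
  (fun g m m' => comm_alg _ _).
exact: h.
Qed.

Lemma phi1 : phi 1 = 1.
Proof. exact: mmap1. Qed.

Lemma phi_forest F : phi (forest K F) = phiS F.
Proof. by rewrite /phi /forest mmapU /= mulr_algl scale1r. Qed.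


Hypothesis hL : forall x : A,
     teq (Delta (L x)) ((L x, 1) :: tmap id L (Delta x)).

Lemma islin_mulr y : islin (fun u : A => u * y).
Proof. by move=> a u v; rewrite mulrDl scalerAl. Qed.
Lemma islin_mull x : islin (fun u : A => x * u).
Proof. by move=> a u v; rewrite mulrDr scalerAr. Qed.
Lemma islin_L : islin L.
Proof. by move=> a u v; rewrite linearP. Qed.
Lemma islin_id : islin (fun u : A => u).
Proof. by []. Qed.

Lemma bil_comp (b : A -> A -> K) (f g : A -> A) : bilinear_form b -> islin f -> islin g ->
  bilinear_form (fun u v => b (f u) (g v)).
Proof.
move=> [h1 h2] hf hg; split=> a x y z /=; first by rewrite hf h1.
by rewrite hg h2.
Qed.

Lemma bil0l (b : A -> A -> K) v : bilinear_form b -> b 0 v = 0.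
Proof.
move=> [h1 _]; have := h1 1 0 0 v; rewrite scale1r addr0 mul1r.
move/(congr1 (fun z => z - b 0 v)); by rewrite subrr addrK => /esym.
Qed.

Lemma bilZl (b : A -> A -> K) c u v : bilinear_form b -> b (c *: u) v = c * b u v.
Proof. move=> hb; have := hb.1 c u 0 v; by rewrite addr0 bil0l // addr0. Qed.

Lemma bilN (b : A -> A -> K) u v : bilinear_form b -> b (- u) v = - b u v.
Proof. by move=> hb; rewrite -scaleN1r bilZl // mulN1r. Qed.

Lemma Delta0 (b : A -> A -> K) : bilinear_form b ->
  \sum_(p <- Delta 0) b p.1 p.2 = 0.
Proof.
move=> hb; have := ih_Delta_lin hA 1 0 0 hb; rewrite scale1r addr0 big_cat big_map /=.
under [X in _ = X + _]eq_bigr do rewrite scale1r.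
move/(congr1 (fun z => z - \sum_(p <- Delta 0) b p.1 p.2)).
by rewrite subrr addrK => /esym.
Qed.

Lemma Delta_sum (I : Type) (r : seq I) c y (b : A -> A -> K) : bilinear_form b ->
  \sum_(p <- Delta (\sum_(i <- r) c i *: y i)) b p.1 p.2
  = \sum_(i <- r) c i * \sum_(p <- Delta (y i)) b p.1 p.2.
Proof.
move=> hb; elim: r => [|i r IH]; first by rewrite !big_nil Delta0.
rewrite !big_cons (ih_Delta_lin hA _ _ _ hb) big_cat big_map /= IH; congr (_ + _).
by rewrite big_distrr; apply: eq_bigr => p _; rewrite bilZl.
Qed.

Lemma eps0 : eps 0 = 0.
Proof.
have := ih_eps_lin hA 1 0 0; rewrite scale1r addr0 mul1r.
move/(congr1 (fun z => z - eps 0)); by rewrite subrr addrK => /esym.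
Qed.

Lemma eps_sum (I : Type) (r : seq I) c y :
  eps (\sum_(i <- r) c i *: y i) = \sum_(i <- r) c i * eps (y i).
Proof.
elim: r => [|i r IH]; first by rewrite !big_nil eps0.
by rewrite !big_cons (ih_eps_lin hA) IH.
Qed.

Lemma epsN x : eps (- x) = - eps x.
Proof.
have := ih_eps_lin hA (-1) x 0; rewrite addr0 eps0 addr0 scaleN1r => ->.
by rewrite mulN1r.
Qed.

Lemma bil_eps : bilinear_form (fun u v => eps u * eps v).
Proof. by split=> a x y z; rewrite (ih_eps_lin hA); ring. Qed.

Lemma eps_eps z : \sum_(p <- Delta z) eps p.1 * eps p.2 = eps z.
Proof. by rewrite -[in RHS](ih_counitl hA z) eps_sum. Qed.

Lemma epsM x y : eps (x * y) = eps x * eps y.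
Proof.
have := ih_inf hA x y bil_eps; rewrite /= eps_eps !big_cat !big_map big_cons big_nil /=.
have -> : \sum_(p <- Delta x) eps p.1 * eps (p.2 * y) = eps (x * y).
  by rewrite -[in RHS](ih_counitl hA x) mulr_suml -eps_sum; congr (eps _);
     apply: eq_bigr => p _; rewrite scalerAl.
have -> : \sum_(p <- Delta y) eps (x * p.1) * eps p.2 = eps (x * y).
  rewrite -[in RHS](ih_counitr hA y) mulr_sumr.
  under [in RHS]eq_bigr do rewrite -scalerAr.
  by rewrite eps_sum; apply: eq_bigr => p _; rewrite mulrC.
rewrite epsN => h.
have : eps (x * y) - eps x * eps y = 0.
  transitivity (eps (x * y) + (eps (x * y) + (- eps x * eps y + 0)) - eps (x * y)).
    by ring.
  by rewrite -h subrr.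
by move/eqP; rewrite subr_eq0 => /eqP.
Qed.

Lemma eps1 : eps 1 = 1.
Proof.
have h := epsM 1 1; rewrite mul1r in h.
have [e0|e0] := eqVneq (eps 1) 0.
  have ez : forall x, eps x = 0 by move=> x; rewrite -[x]mulr1 epsM e0 mulr0.
  have := ih_counitl hA 1.
  under eq_bigr do rewrite ez scale0r.
  by rewrite big1 // => /esym /eqP; rewrite oner_eq0.
by apply: (mulfI e0); rewrite -h mulr1.
Qed.

Lemma epsL y : eps (L y) = 0.
Proof.
have := hL y bil_eps; rewrite /= eps_eps big_cons big_map /= eps1 mulr1.
have -> : \sum_(p <- Delta y) eps p.1 * eps (L p.2) = eps (L y).
  by rewrite -[in RHS](ih_counitl hA y) (islin_sum _ _ _ islin_L) eps_sum.
move/(congr1 (fun z => z - eps (L y))); by rewrite subrr addrK => /esym.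
Qed.

Lemma eps_phiS F : eps (phiS F) = (F == [::])%:R.
Proof.
case: F => [|[s] F]; first by rewrite eps1.
have -> : phiS (Node s :: F) = phiT (Node s) * phiS F by [].
by rewrite epsM phiT_node epsL mul0r.
Qed.

Lemma phi_Bplus x : phi (Bplus x) = L (phi x).
Proof.
rewrite /Bplus /lin_ext (islin_sum _ _ _ islin_phi) [phi x]phiE (islin_sum _ _ _ islin_L).
apply: eq_bigr => k _; rewrite phi_forest.
have -> : phiS [:: Node k] = phiT (Node k) * 1 by [].
by rewrite mulr1 phiT_node.
Qed.


Definition PT (t : ptree) := forall b : A -> A -> K, bilinear_form b ->
  \sum_(p <- Delta (phiT t)) b p.1 p.2 = \sum_(p <- DeltaT K t) b (phi p.1) (phi p.2).
Definition QF (s : seq ptree) := forall b : A -> A -> K, bilinear_form b ->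
  \sum_(p <- Delta (phiS s)) b p.1 p.2 = \sum_(p <- DeltaF K s) b (phi p.1) (phi p.2).

Lemma main_forest s : QF s.
Proof.
apply: (@forest_ind2 PT QF).
- move=> b hb; rewrite /phiS /= big_cons big_nil phi1 addr0.
  have := ih_inf hA 1 1 hb; rewrite !big_cat !big_map big_cons big_nil /= mul1r.
  under [X in _ = X + _]eq_bigr do rewrite mulr1.
  under [X in _ = _ + (X + _)]eq_bigr do rewrite mul1r.
  rewrite bilN // addr0 => h.
  have : \sum_(p <- Delta 1) b p.1 p.2 - b 1 1 = 0.
    transitivity (\sum_(p <- Delta 1) b p.1 p.2 + (\sum_(p <- Delta 1) b p.1 p.2 + - b 1 1)
       - \sum_(p <- Delta 1) b p.1 p.2).
      by ring.
    by rewrite -h subrr.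
  by move/eqP; rewrite subr_eq0 => /eqP.
- move=> t s0 IHt IHs b hb.
  have -> : phiS (t :: s0) = phiT t * phiS s0 by [].
  have -> : DeltaF K (t :: s0) =
      [seq (forest K [:: t] * p.1, p.2) | p <- DeltaF K s0]
      ++ [seq (p.1, p.2 * forest K s0) | p <- DeltaT K t]
      ++ [:: (- forest K [:: t], forest K s0)] by [].
  rewrite (ih_inf hA _ _ hb) !big_cat !big_map !big_cons !big_nil /=.
  have h1 := IHt (fun u v => b u (v * phiS s0)) (bil_comp hb islin_id (islin_mulr (phiS s0))).
  have h2 := IHs (fun u v => b (phiT t * u) v) (bil_comp hb (islin_mull (phiT t)) islin_id).
  simpl in h1, h2; rewrite h1 h2 addrCA; congr (_ + (_ + _)).
  + by apply: eq_bigr => p _; rewrite phiM phi_forest /phiS /= mulr1.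
  + by apply: eq_bigr => p _; rewrite phiM phi_forest.
  + by rewrite raddfN /= !phi_forest /phiS /= mulr1.
- move=> s0 IHs b hb.
  have -> : DeltaT K (Node s0) =
     (forest K [:: Node s0], 1) :: tmap id (@Bplus K) (DeltaF K s0).
    rewrite /=; congr (_ :: tmap _ _ _); elim: s0 {IHs} => //= t s0 ->; done.
  rewrite phiT_node (hL _ hb) !big_cons phi_forest phi1.
  have -> : phiS [:: Node s0] = L (phiS s0) by rewrite -phiT_node /= mulr1.
  congr (_ + _); rewrite /tmap !big_map /=.
  have h := IHs _ (bil_comp hb islin_id islin_L); rewrite /= in h; rewrite h.
  by apply: eq_bigr => p _; rewrite phi_Bplus.
Qed.

End Main.

Theorem theorem16 (K : fieldType) (A : algType K)
  (Delta : A -> tensor A A) (eps : A -> K)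
  (hA : is_inf_hopf Delta eps) (L : {linear A -> A})
  (hL : forall x : A,
     teq (Delta (L x)) ((L x, 1) :: tmap id L (Delta x))) :
  exists phi : {linear Hf K -> A},
    (inf_hopf_morph Delta eps phi /\ forall x, phi (Bplus x) = L (phi x)) /\
    forall psi : {linear Hf K -> A},
      inf_hopf_morph Delta eps psi /\ (forall x, psi (Bplus x) = L (psi x)) ->
      forall x, psi x = phi x.
Proof.
exists (@phi K A L : {linear _ -> _}).
split; [split; [split|] |].
- exact: phi1.
- exact: phiM.
- move=> x /=; rewrite phiE (eps_sum hA).
  under eq_bigr do rewrite (eps_phiS hA hL).
  rewrite /epsH.
  have [h|h] := boolP (FMonom [::] \in msupp x).
    rewrite (big_fsetD1 _ h) /= mulr1 big1_seq ?addr0 // => k /andP[_].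
    rewrite in_fsetD1 => /andP[hk _].
    case: eqP => [e|]; last by rewrite mulr0.
    by move: hk; rewrite -e fmK eqxx.
  rewrite mcoeff_outdom // big1_seq // => k /andP[_ hk].
  case: eqP => [e|]; last by rewrite mulr0.
  by move: h; rewrite -e fmK hk.
- move=> x b hb /=.
  rewrite phiE (Delta_sum hA _ _ _ hb) /DeltaH /tmap big_map big_flatten big_map.
  apply: eq_bigr => k _; rewrite big_map /=.
  under [RHS]eq_bigr do rewrite phi_scale (bilZl _ _ _ hb).
  rewrite -big_distrr /=; congr (_ * _).
  have := main_forest hA hL (fmonom_val k) hb; rewrite /= => ->.
  by [].
- exact: phi_Bplus.
- move=> psi [[p1 pM _ _] pB] x.
  have lpsi : islin psi by move=> a u v; exact: linearP.
  transitivity (@phi K A L x); last by [].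
  rewrite (lin_expand x lpsi) (lin_expand x (@islin_phi K A L)).
  apply: eq_bigr => k _; congr (_ *: _); rewrite phi_forest.
  apply: (@forest_ind2 (fun t => psi (forest K [:: t]) = phiT L t)
                     (fun s => psi (forest K s) = phiS L s)).
  + by rewrite forest_nil p1.
  + by move=> t s ht hs; rewrite forest_cons pM ht hs.
  + by move=> s hs; rewrite -Bplus_forest pB hs phiT_node.
Qed.
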